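(* Let $X$ and $Y$ be real Banach spaces and $\mathcal{D}$ a closed subspace of $F_Y(X)$. Then $L(F_Y(X)/\mathcal{D},Y)$ is linearly isometrically isomorphic to ${}^{\diamondsuit}\mathcal{D}$, via $f\mapsto(\gamma+\mathcal{D}\mapsto\gamma(f))$ for $f\in{}^{\diamondsuit}\mathcal{D}$.
   Context: $Lip_0(X,Y)$ is the Banach space of Lipschitz maps $f:X\to Y$ with $f(0)=0$ and norm $Lip(f)=\sup_{x\neq y}\|f(x)-f(y)\|/\|x-y\|$. For $x\in X$, $\delta_x^Y\in L(Lip_0(X,Y),Y)$ is evaluation $\delta_x^Y(f)=f(x)$. $F_Y(X)$ is the norm-closed linear span of $\{\delta_x^Y:x\in X\}$ in $L(Lip_0(X,Y),Y)$. For $\mathcal{D}\subset F_Y(X)$, ${}^{\diamondsuit}\mathcal{D}=\{f\in Lip_0(X,Y):\gamma(f)=0\ \forall\gamma\in\mathcal{D}\}$, with the norm $Lip(\cdot)$. $F_Y(X)/\mathcal{D}$ carries the quotient norm. *)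

(* Defs.v *)
From HB Require Import structures.
From mathcomp Require Import all_boot all_order all_algebra.
From mathcomp Require Import all_classical all_reals all_analysis.
Set Implicit Arguments. Unset Strict Implicit. Unset Printing Implicit Defensive.
Import Order.TTheory GRing.Theory Num.Theory.
Import numFieldNormedType.Exports.
Local Open Scope classical_set_scope.
Local Open Scope ring_scope.

Section LipFree.
Variables (R : realType) (X Y : normedModType R).

Definition lip0 (f : X -> Y) : Prop :=
  f 0 = 0 /\ exists C : R, forall x y, `|f x - f y| <= C * `|x - y|.

Definition lipn (f : X -> Y) : R :=
  sup [set r | exists x y : X, x != y /\ r = `|f x - f y| / `|x - y|].

(* Operators on Lip_0(X,Y) are functions (X -> Y) -> Y; only their values on
   lip0 functions matter. *)
Definition delta (x : X) : (X -> Y) -> Y := fun f => f x.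

Definition opF (g : (X -> Y) -> Y) : R :=
  sup [set `|g f| | f in [set f | lip0 f /\ lipn f <= 1]].

(* gamma belongs to F_Y(X): norm-closure of span{delta_x}, the norm being the
   operator norm  (||gamma - s|| <= eps  <->  ||gamma f - s f|| <= eps Lip f) *)
Definition inF (g : (X -> Y) -> Y) : Prop :=
  forall eps : R, 0 < eps ->
  exists (n : nat) (a : 'I_n -> R) (xs : 'I_n -> X),
    forall f, lip0 f ->
      `|g f - \sum_(i < n) a i *: delta (xs i) f| <= eps * lipn f.

Definition closed_subspaceF (D : set ((X -> Y) -> Y)) : Prop :=
  [/\ forall g, D g -> inF g,
      D (fun _ => 0),
      forall (a : R) g1 g2, D g1 -> D g2 -> D (fun f => a *: g1 f + g2 f)
    & forall g, inF g ->
        (forall eps : R, 0 < eps ->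
           exists d, D d /\ opF (fun f => g f - d f) <= eps) -> D g].

Definition diamond (D : set ((X -> Y) -> Y)) (f : X -> Y) : Prop :=
  lip0 f /\ forall g, D g -> g f = 0.

Definition qnorm (D : set ((X -> Y) -> Y)) (g : (X -> Y) -> Y) : R :=
  inf [set opF (fun f => g f - d f) | d in D].

(* T represents an element of L(F_Y(X)/D, Y): T is given on representatives,
   is constant on cosets, linear and bounded for the quotient norm. *)
Definition LQ (D : set ((X -> Y) -> Y)) (T : ((X -> Y) -> Y) -> Y) : Prop :=
  [/\ forall g1 g2, inF g1 -> inF g2 -> D (fun f => g1 f - g2 f) -> T g1 = T g2,
      forall (a : R) g1 g2, inF g1 -> inF g2 ->
        T (fun f => a *: g1 f + g2 f) = a *: T g1 + T g2
    & exists C : R, forall g, inF g -> `|T g| <= C * qnorm D g].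

Definition opQ (D : set ((X -> Y) -> Y)) (T : ((X -> Y) -> Y) -> Y) : R :=
  sup [set `|T g| | g in [set g | inF g /\ qnorm D g <= 1]].

Definition Phi (f : X -> Y) : ((X -> Y) -> Y) -> Y := fun g => g f.

End LipFree.

(* Main.v *)
Require Import Defs.
From HB Require Import structures.
From mathcomp Require Import all_boot all_order all_algebra.
From mathcomp Require Import all_classical all_reals all_analysis.
From mathcomp Require Import ring lra.
Import Order.TTheory GRing.Theory Num.Theory.
Import numFieldNormedType.Exports.
Local Open Scope classical_set_scope.
Local Open Scope ring_scope.
Set Implicit Arguments. Unset Strict Implicit.

Section Aux.
Variable R : realType.

Lemma supLe (S : set R) (b : R) : (forall r, S r -> r <= b) -> 0 <= b -> sup S <= b.
Proof.
move=> Hb b0; have [->|ne] := eqVneq S set0; first by rewrite sup0.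
by apply: ge_sup => //; apply/set0P.
Qed.

Lemma supGe0 (S : set R) : (forall r, S r -> 0 <= r) -> 0 <= sup S.
Proof.
move=> H; have [->|/set0P [e Se]] := eqVneq S set0; first by rewrite sup0.
have [ub|nub] := pselect (has_ubound S).
  by apply: (le_trans (H _ Se)); apply: ub_le_sup.
by rewrite sup_out // => -[].
Qed.

Lemma leSup (S : set R) (b r : R) : (forall r, S r -> r <= b) -> S r -> r <= sup S.
Proof. by move=> Hb Sr; apply: ub_le_sup => //; exists b. Qed.

Lemma approx_eq (V : normedModType R) (u v : V) (K : R) :
  (forall eps : R, 0 < eps -> `|u - v| <= eps * K) -> u = v.
Proof.
move=> H; have [//|Hn] := eqVneq u v; exfalso.
have hp : (0:R) < `|u - v| by rewrite normr_gt0 subr_eq0.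
move: H hp; move: (`|u - v| : R) => d H hp.
have Kp : 0 < `|K| + 1 by rewrite ltr_pwDr // normr_ge0.
pose e := d / (2 * (`|K| + 1)).
have ep : 0 < e by rewrite divr_gt0 // mulr_gt0.
have h1 : e * K <= e * (`|K| + 1) by rewrite ler_pM2l // ler_wpDr // real_ler_norm // num_real.
have h2 : e * (`|K| + 1) = d / 2.
  rewrite /e invfM mulrA -mulrA [_^-1 * _]mulrC mulfV ?mulr1 //; by rewrite gt_eqF.
have := le_trans (H e ep) h1; rewrite h2 => h3.
lra.
Qed.
End Aux.

Section Lip.
Variables (R : realType) (X Y : normedModType R).
Implicit Types (f h : X -> Y) (g : (X -> Y) -> Y).

Lemma lipn_ge0 f : 0 <= lipn f.
Proof. by apply: supGe0 => r [x [y [_ ->]]]; rewrite divr_ge0. Qed.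

Lemma lipn_le f : lip0 f -> forall x y, `|f x - f y| <= lipn f * `|x - y|.
Proof.
move=> [f0 [C HC]] x y; have [->|nxy] := eqVneq x y.
  by rewrite !subrr !normr0 mulr0.
have hp : 0 < `|x - y| by rewrite normr_gt0 subr_eq0.
rewrite -ler_pdivrMr //; apply: (@leSup _ _ C).
  by move=> r [x' [y' [nxy' ->]]]; rewrite ler_pdivrMr // normr_gt0 subr_eq0.
by exists x, y.
Qed.


Lemma lipn_bound f b : (forall x y, `|f x - f y| <= b * `|x - y|) -> 0 <= b -> lipn f <= b.
Proof.
move=> H b0; apply: supLe => // r [x [y [nxy ->]]].
by rewrite ler_pdivrMr // normr_gt0 subr_eq0.
Qed.

Lemma lip0_comb (c : R) f h : lip0 f -> lip0 h -> lip0 (fun x => c *: f x + h x).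
Proof.
move=> [f0 [C1 H1]] [h0 [C2 H2]]; split; first by rewrite f0 h0 scaler0 addr0.
exists (`|c| * `|C1| + `|C2|) => x y.
rewrite opprD addrACA -scalerBr mulrDl.
apply: (le_trans (ler_normD _ _)); apply: lerD.
  rewrite normrZ -mulrA; apply: ler_wpM2l; first exact: normr_ge0.
  apply: (le_trans (H1 x y)); apply: ler_wpM2r; first exact: normr_ge0.
  by rewrite real_ler_norm // num_real.
apply: (le_trans (H2 x y)); apply: ler_wpM2r; first exact: normr_ge0.
by rewrite real_ler_norm // num_real.
Qed.

Lemma lipn0 f : lip0 f -> lipn f = 0 -> f = fun _ => 0.
Proof.
move=> Hf H0; apply: funext => x; have := lipn_le Hf x 0.
by rewrite H0 mul0r (proj1 Hf) subr0 normr_le0 => /eqP.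
Qed.

Definition S n (a : 'I_n -> R) (xs : 'I_n -> X) : (X -> Y) -> Y :=
  fun h => \sum_(i < n) a i *: delta (xs i) h.


Lemma inF_S n a xs : inF (@S n a xs).
Proof.
move=> eps ep; exists n, a, xs => f Hf; rewrite /S subrr normr0.
by rewrite mulr_ge0 ?lipn_ge0 // ltW.
Qed.

Lemma S_comb n a xs (c : R) f h :
  @S n a xs (fun x => c *: f x + h x) = c *: S a xs f + S a xs h.
Proof.
rewrite /S /delta scaler_sumr -big_split /=; apply: eq_bigr => i _.
by rewrite scalerDr !scalerA mulrC.
Qed.

Lemma S_bound n a xs f : lip0 f ->
  `|@S n a xs f| <= (\sum_(i < n) `|a i| * `|xs i|) * lipn f.
Proof.
move=> Hf; rewrite /S mulr_suml; apply: (le_trans (ler_norm_sum _ _ _)).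
apply: ler_sum => i _; rewrite normrZ -mulrA; apply: ler_wpM2l; first exact: normr_ge0.
have := lipn_le Hf (xs i) 0; rewrite (proj1 Hf) !subr0 /delta mulrC //.
Qed.

End Lip.

Lemma subr_split (V : zmodType) (A B C a b : V) :
  A - (B + C) = (A - (a + b)) - ((B - a) + (C - b)).
Proof.
have -> : (B - a) + (C - b) = (B + C) - (a + b) by rewrite addrACA -opprD.
by rewrite opprB addrA subrK.
Qed.

Section Lip2.
Variables (R : realType) (X Y : normedModType R).
Implicit Types (f h : X -> Y) (g : (X -> Y) -> Y).

Lemma lip0_0 : lip0 (fun _ : X => (0 : Y)).
Proof. by split => //; exists 0 => x y; rewrite subrr normr0 mul0r. Qed.

Lemma S_comb2 n1 (a1 : 'I_n1 -> R) xs1 n2 (a2 : 'I_n2 -> R) xs2 (c : R) :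
  exists n (a : 'I_n -> R) xs, forall h : X -> Y,
    S a xs h = c *: S a1 xs1 h + S a2 xs2 h.
Proof.
exists (n1 + n2), (fun i => match @fintype.split n1 n2 i with inl j => c * a1 j | inr j => a2 j end),
  (fun i => match @fintype.split n1 n2 i with inl j => xs1 j | inr j => xs2 j end) => h.
rewrite /S big_split_ord /= scaler_sumr; congr (_ + _); apply: eq_bigr => i _.
  by rewrite (unsplitK (inl _ i)) scalerA.
by rewrite (unsplitK (inr _ i)).
Qed.

Lemma inF_lin g (c : R) f h : inF g -> lip0 f -> lip0 h ->
  g (fun x => c *: f x + h x) = c *: g f + g h.
Proof.
move=> Hg Hf Hh.
have HF := lip0_comb c Hf Hh.
apply: (@approx_eq _ _ _ _ (lipn (fun x => c *: f x + h x) + `|c| * lipn f + lipn h)).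
move=> eps ep; have [n [a [xs Hs]]] := Hg eps ep.
rewrite (subr_split _ _ _ (c *: S a xs f) (S a xs h)).
rewrite -(S_comb a xs c f h) -scalerBr.
have e1 := Hs _ HF; have e2 := Hs _ Hf; have e3 := Hs _ Hh.
rewrite !mulrDr; apply: (le_trans (ler_normB _ _)); rewrite -addrA; apply: lerD.
  exact: e1.
apply: (le_trans (ler_normD _ _)); apply: lerD => //.
rewrite normrZ mulrCA; apply: ler_wpM2l; first exact: normr_ge0.
exact: e2.
Qed.

Lemma inF_0 g : inF g -> g (fun _ => 0) = 0.
Proof.
move=> Hg; apply: (@approx_eq _ _ _ _ (lipn (fun _ : X => (0:Y)))) => eps ep.
have [n [a [xs Hs]]] := Hg eps ep; have := Hs _ lip0_0.
suff -> : \sum_(i < n) a i *: delta (xs i) (fun _ : X => (0:Y)) = 0 by [].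
by rewrite big1 // => i _; rewrite /delta scaler0.
Qed.

Lemma inF_ub g : inF g -> exists b, forall f, lip0 f -> lipn f <= 1 -> `|g f| <= b.
Proof.
move=> Hg; have [n [a [xs Hs]]] := Hg 1 ltr01.
set K := \sum_(i < n) `|a i| * `|xs i|.
have K0 : 0 <= K by apply: sumr_ge0 => i _; rewrite mulr_ge0.
exists (1 + K) => f Hf L1.
have := Hs f Hf; rewrite mul1r => h1.
have h2 := S_bound a xs Hf.
rewrite -(subrK (S a xs f) (g f)); apply: (le_trans (ler_normD _ _)).
apply: lerD; first exact: le_trans h1 L1.
apply: (le_trans h2); rewrite -[X in _ <= X]mulr1; apply: ler_wpM2l => //.
Qed.


Lemma opF_bound g f : inF g -> lip0 f -> `|g f| <= opF g * lipn f.
Proof.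
move=> Hg Hf; have [L0|Lne] := eqVneq (lipn f) 0.
  by rewrite L0 mulr0 (lipn0 Hf L0) inF_0 // normr0.
have Lp : 0 < lipn f by rewrite lt_def Lne lipn_ge0.
set L := lipn f in Lne Lp *.
have Hf' := lip0_comb L^-1 Hf lip0_0.
have Li : 0 <= L^-1 by rewrite invr_ge0 ltW.
have E : g (fun x => L^-1 *: f x + 0) = L^-1 *: g f.
  by rewrite (inF_lin L^-1 Hg Hf lip0_0) inF_0 // addr0.
have L1 : lipn (fun x => L^-1 *: f x + 0) <= 1.
  apply: lipn_bound => // x y; rewrite !addr0 -scalerBr normrZ mul1r.
  rewrite (ger0_norm Li) mulrC ler_pdivrMr // mulrC; exact: lipn_le.
have [b Hb] := inF_ub Hg.
have : `|g (fun x => L^-1 *: f x + 0)| <= opF g.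
  apply: (@leSup _ _ b); first by move=> r [h [Hh1 Hh2] <-]; exact: Hb.
  by exists (fun x => L^-1 *: f x + 0).
rewrite E normrZ (ger0_norm Li) mulrC ler_pdivrMr //.
Qed.

Lemma inF_comb g1 g2 (c : R) : inF g1 -> inF g2 -> inF (fun f => c *: g1 f + g2 f).
Proof.
move=> H1 H2 eps ep.
have cp : 0 < `|c| + 1 by rewrite ltr_pwDr // normr_ge0.
have e1p : 0 < eps / 2 / (`|c| + 1) by rewrite !divr_gt0.
have e2p : 0 < eps / 2 by rewrite divr_gt0.
have [n1 [a1 [xs1 Hs1]]] := H1 _ e1p.
have [n2 [a2 [xs2 Hs2]]] := H2 _ e2p.
have [n [a [xs Hs]]] := S_comb2 a1 xs1 a2 xs2 c.
exists n, a, xs => f Hf; have := Hs f; rewrite /S => ->.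
rewrite opprD addrACA -scalerBr; apply: (le_trans (ler_normD _ _)).
have := Hs1 f Hf; have := Hs2 f Hf => h2 h1.
have Lf := lipn_ge0 f.
have -> : eps * lipn f = `|c| * (eps / 2 / (`|c| + 1) * lipn f) + eps / 2 * lipn f
   + (eps / 2 / (`|c| + 1) * lipn f).
  field; by rewrite gt_eqF.
apply: (@le_trans _ _ (`|c| * (eps / 2 / (`|c| + 1) * lipn f) + eps / 2 * lipn f)).
  2: by rewrite lerDl mulr_ge0 // ltW.
apply: lerD => //; rewrite normrZ; apply: ler_wpM2l => //; exact: normr_ge0.
Qed.

End Lip2.

Section Lip3.
Variables (R : realType) (X Y : normedModType R).
Implicit Types (f h : X -> Y) (g : (X -> Y) -> Y) (D : set ((X -> Y) -> Y)).

Lemma inF_zero : inF (fun _ : X -> Y => (0 : Y)).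
Proof.
move=> eps ep; exists 0%N, (fun _ => 0), (fun _ => 0) => f Hf.
by rewrite big_ord0 subrr normr0 mulr_ge0 ?lipn_ge0 // ltW.
Qed.

Lemma S1E (x : X) h : S (fun _ : 'I_1 => (1:R)) (fun _ => x) h = h x.
Proof. by rewrite /S big_ord1 scale1r. Qed.

Lemma inF_delta (x : X) : inF (fun h : X -> Y => h x).
Proof.
have -> : (fun h : X -> Y => h x) = S (fun _ : 'I_1 => (1:R)) (fun _ => x).
  by apply: funext => h; rewrite S1E.
exact: inF_S.
Qed.

Lemma inF_dd (c d : R) (x y : X) : inF (fun h : X -> Y => c *: h x + d *: h y).
Proof.
have [n [a [xs Hs]]] := @S_comb2 R X Y _ (fun _ : 'I_1 => (1:R)) (fun _ => x) _
   (fun _ : 'I_1 => d) (fun _ => y) c.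
have -> : (fun h : X -> Y => c *: h x + d *: h y) = S a xs.
  apply: funext => h; rewrite Hs S1E; congr (_ + _).
  by rewrite /S big_ord1.
exact: inF_S.
Qed.

Lemma opF_ge0 g : 0 <= opF g.
Proof. by apply: supGe0 => r [f _ <-]. Qed.

Lemma qnorm_le D g d : D d -> qnorm D g <= opF (fun f => g f - d f).
Proof.
move=> Dd; apply: ge_inf; last by exists d.
by exists 0 => r [d' _ <-]; exact: opF_ge0.
Qed.

Lemma qnorm_ge0 D g : D (fun _ => 0) -> 0 <= qnorm D g.
Proof.
move=> D0; apply: lb_le_inf; first by exists (opF (fun f => g f - 0)), (fun _ => 0).
by move=> r [d' _ <-]; exact: opF_ge0.
Qed.

Lemma opF_le g (b : R) : 0 <= b ->
  (forall f, lip0 f -> `|g f| <= b * lipn f) -> opF g <= b.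
Proof.
move=> b0 H; apply: supLe => // r [f [Hf L1] <-].
apply: (le_trans (H f Hf)); rewrite -[X in _ <= X]mulr1; exact: ler_wpM2l.
Qed.

Lemma inF_sub g1 g2 : inF g1 -> inF g2 -> inF (fun f => g1 f - g2 f).
Proof.
move=> H1 H2; have -> : (fun f => g1 f - g2 f) = (fun f => (-1) *: g2 f + g1 f).
  by apply: funext => f; rewrite scaleN1r addrC.
exact: inF_comb.
Qed.

Lemma Phi_bound D f g : D (fun _ => 0) -> (forall d, D d -> inF d) ->
  diamond D f -> inF g -> `|g f| <= lipn f * qnorm D g.
Proof.
move=> D0 DF [Hf Hd] Hg; have [L0|Lne] := eqVneq (lipn f) 0.
  by rewrite L0 mul0r (lipn0 Hf L0) inF_0 // normr0.
have Lp : 0 < lipn f by rewrite lt_def Lne lipn_ge0.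
rewrite mulrC -ler_pdivrMr //; apply: lb_le_inf.
  by exists (opF (fun h => g h - 0)), (fun _ => 0).
move=> r [d Dd <-]; rewrite ler_pdivrMr //.
have := opF_bound (inF_sub Hg (DF d Dd)) Hf; by rewrite (Hd d Dd) subr0.
Qed.

End Lip3.

Unset Implicit Arguments.

Theorem mainTheorem14 (R : realType) (X Y : completeNormedModType R)
    (D : set ((X -> Y) -> Y)) :
  closed_subspaceF D ->
  (* Phi maps ^diamond D into L(F_Y(X)/D, Y) *)
  (forall f, diamond D f -> LQ D (Phi f)) /\
  (* linearity of Phi on the subspace ^diamond D *)
  (forall (a : R) f g, diamond D f -> diamond D g ->
     diamond D (fun x => a *: f x + g x) /\
     forall gam, inF gam ->
       Phi (fun x => a *: f x + g x) gam = a *: Phi f gam + Phi g gam) /\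
  (* isometry *)
  (forall f, diamond D f -> opQ D (Phi f) = lipn f) /\
  (* injectivity *)
  (forall f g, diamond D f -> diamond D g ->
     (forall gam, inF gam -> Phi f gam = Phi g gam) -> f = g) /\
  (* surjectivity *)
  (forall T, LQ D T ->
     exists f, diamond D f /\ forall gam, inF gam -> T gam = Phi f gam).
Proof.
move=> [DF D0 Dcomb Dcl].
have P1 : forall f, diamond D f -> LQ D (Phi f).
  move=> f [Hf Hd]; split.
  - move=> g1 g2 _ _ /Hd; rewrite /Phi => /eqP; rewrite subr_eq0 => /eqP //.
  - by [].
  - exists (lipn f) => g Hg; exact: Phi_bound.
split => //; split.
  move=> a f g [Hf Hdf] [Hg Hdg]; split; last first.
    by move=> gam Hgam; rewrite /Phi (inF_lin a Hgam Hf Hg).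
  split; first exact: lip0_comb.
  by move=> gam Dgam; rewrite (inF_lin a (DF _ Dgam) Hf Hg) Hdf // Hdg // scaler0 addr0.
split.
  move=> f Hdiam; have [Hf Hd] := Hdiam.
  have UB : forall r, [set `|Phi f g| | g in [set g | inF g /\ qnorm D g <= 1]] r
      -> r <= lipn f.
    move=> r [g [Hg q1] <-]; apply: (le_trans (Phi_bound D0 DF Hdiam Hg)).
    rewrite -[X in _ <= X]mulr1; apply: ler_wpM2l => //; exact: lipn_ge0.
  apply/eqP; rewrite eq_le; apply/andP; split.
    rewrite /opQ; apply: supLe => //; exact: lipn_ge0.
  rewrite /lipn; apply: supLe; last first.
    by rewrite /opQ; apply: supGe0 => r [g _ <-].
  move=> r [x [y [nxy ->]]].
  have hp : 0 < `|x - y| by rewrite normr_gt0 subr_eq0.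
  have c0 : 0 <= `|x - y|^-1 by rewrite invr_ge0 ltW.
  pose gam := fun h : X -> Y => `|x - y|^-1 *: h x + (- `|x - y|^-1) *: h y.
  have gamE : forall h, gam h = `|x - y|^-1 *: (h x - h y).
    by move=> h; rewrite /gam scaleNr -scalerBr.
  have Hgam : inF gam := @inF_dd R X Y _ _ x y.
  have Hq : qnorm D gam <= 1.
    apply: (le_trans (qnorm_le gam D0)); apply: opF_le => // h Hh.
    rewrite subr0 gamE normrZ (ger0_norm c0) mul1r mulrC ler_pdivrMr //.
    exact: lipn_le.
  apply: (leSup UB); exists gam => //.
  by rewrite /Phi gamE normrZ (ger0_norm c0) mulrC.
split.
  move=> f g _ _ H; apply: funext => x; exact: (H _ (@inF_delta R X Y x)).
move=> T [Tcst Tlin [C TC]].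
have iz := @inF_zero R X Y. have iD := @inF_delta R X Y.
have iS := @inF_S R X Y.
have TC' : forall g, inF g -> `|T g| <= `|C| * opF g.
  move=> g Hg; apply: (le_trans (TC g Hg)); apply: (@le_trans _ _ (`|C| * qnorm D g)).
    apply: ler_wpM2r; [exact: qnorm_ge0 | exact: real_ler_norm (num_real _)].
  apply: ler_wpM2l; first exact: normr_ge0.
  apply: (le_trans (qnorm_le g D0)); rewrite le_eqVlt; apply/orP; left; apply/eqP.
  by congr opF; apply: funext => h /=; exact: subr0.
have T0 : T (fun _ => 0) = 0.
  have E : T (fun _ => 0) = T (fun f => (-1) *: (fun _ : X -> Y => (0:Y)) f + (fun _ => 0) f).
    by congr T; apply: funext => h /=; rewrite scaler0 addr0.
  by rewrite E (Tlin (-1) _ _ iz iz) scaleN1r addNr.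
have Tsub : forall g1 g2, inF g1 -> inF g2 -> T (fun f => g1 f - g2 f) = T g1 - T g2.
  move=> g1 g2 H1 H2.
  have E : T (fun f => g1 f - g2 f) = T (fun f => (-1) *: g2 f + g1 f).
    by congr T; apply: funext => h; rewrite scaleN1r addrC.
  by rewrite E (Tlin (-1) g2 g1 H2 H1) scaleN1r addrC.
pose f := fun x => T (fun h : X -> Y => h x).
have TS : forall n (a : 'I_n -> R) xs, T (S a xs) = S a xs f.
  elim => [|n IH] a xs.
    rewrite /S big_ord0 -T0; congr T; apply: funext => h; by rewrite big_ord0.
  have E : S a xs = fun h => a ord_max *: (fun h : X -> Y => h (xs ord_max)) h
     + S (fun i => a (widen_ord (leqnSn n) i)) (fun i => xs (widen_ord (leqnSn n) i)) h.
    by apply: funext => h; rewrite /S big_ord_recr addrC.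
  by rewrite E (Tlin _ _ _ (iD _) (iS _ _ _)) IH.
have Hf : lip0 f.
  split.
    rewrite /f -T0; apply: Tcst; [exact: iD | exact: iz | ].
    apply: Dcl; first exact: (inF_sub (iD 0) iz).
    move=> eps ep; exists (fun _ => 0); split => //.
    apply: opF_le (ltW ep) _ => h Hh; rewrite /= !subr0 (proj1 Hh) normr0.
    by rewrite mulr_ge0 ?lipn_ge0 // ltW.
  exists `|C| => x y; rewrite /f -(Tsub _ _ (iD x) (iD y)).
  apply: (le_trans (TC' _ (inF_sub (iD x) (iD y)))).
  apply: ler_wpM2l; first exact: normr_ge0.
  apply: opF_le; first exact: normr_ge0.
  by move=> h Hh; rewrite mulrC; exact: lipn_le.
have Hrep : forall gam, inF gam -> T gam = Phi f gam.
  move=> gam Hgam; apply: (@approx_eq _ _ _ _ (`|C| + lipn f)) => eps ep.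
  have [n [a [xs Hs]]] := Hgam eps ep.
  have -> : T gam - Phi f gam = (T gam - T (S a xs)) + (S a xs f - gam f).
    by rewrite TS addrA subrK.
  rewrite mulrDr; apply: (le_trans (ler_normD _ _)); apply: lerD; last first.
    by rewrite distrC; exact: Hs.
  rewrite -(Tsub _ _ Hgam (iS _ a xs)).
  apply: (le_trans (TC' _ (inF_sub Hgam (iS _ a xs)))).
  rewrite mulrC; apply: ler_wpM2r; first exact: normr_ge0.
  apply: opF_le; first exact: ltW.
  exact: Hs.
exists f; split => //; split => // g Dg.
have := Hrep g (DF g Dg); rewrite /Phi => <-.
rewrite -T0; apply: Tcst; [exact: DF | exact: iz |].
by rewrite (_ : (fun h => _ - _) = g) //; apply: funext => h; exact: subr0.
Qed.
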